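(* The projection of $\mathcal T_\rightarrow$ (and of $\mathcal T_\leftarrow$) onto the complex plane of the coordinate $z_2=-[z\cdot b]$ is the cut-plane $\mathbb C\setminus[-1,1]$. The image of $\mathcal T_\leftarrow\times\mathcal T_\rightarrow$ (and of $\mathcal T_\rightarrow\times\mathcal T_\leftarrow$) under $(z,z')\mapsto[z\cdot z']$ is the cut-plane $\mathbb C\setminus[-1,1]$.
   Context: $[z\cdot z']=z_0z'_0-z_1z'_1-z_2z'_2$ on $\mathbb C^3$, $z^2=[z\cdot z]$; $X^{(c)}=\{z\in\mathbb C^3:z^2=-1\}$, $z=x+iy$; $V^+=\{y\in\mathbb R^3:y^2>0,y_0>0\}$; fix $e\in V^+$; $\mathcal T_\rightarrow=\{z\in X^{(c)}:y^2<0,{\rm sgn}\det(e,x,y)=-1\}$, $\mathcal T_\leftarrow=\{z\in X^{(c)}:y^2<0,{\rm sgn}\det(e,x,y)=+1\}$; $b=(0,0,1)$. *)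

(* Defs.v *)
From Stdlib Require Import Reals.
From Coquelicot Require Import Coquelicot.
Open Scope R_scope.

Record rvec3 := RV { r0 : R; r1 : R; r2 : R }.
Record cvec3 := CV { c0 : C; c1 : C; c2 : C }.

Definition cdot (z w : cvec3) : C :=
  Cminus (Cminus (Cmult (c0 z) (c0 w)) (Cmult (c1 z) (c1 w))) (Cmult (c2 z) (c2 w)).

Definition rdot (x y : rvec3) : R := r0 x * r0 y - r1 x * r1 y - r2 x * r2 y.
Definition rsq (x : rvec3) : R := rdot x x.

Definition cre (z : cvec3) : rvec3 := RV (Re (c0 z)) (Re (c1 z)) (Re (c2 z)).
Definition cim (z : cvec3) : rvec3 := RV (Im (c0 z)) (Im (c1 z)) (Im (c2 z)).

Definition Xc (z : cvec3) : Prop := cdot z z = RtoC (-1).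

Definition Vplus (y : rvec3) : Prop := rsq y > 0 /\ r0 y > 0.

Definition det3 (a b c : rvec3) : R :=
    r0 a * (r1 b * r2 c - r2 b * r1 c)
  - r0 b * (r1 a * r2 c - r2 a * r1 c)
  + r0 c * (r1 a * r2 b - r2 a * r1 b).

Definition T_right (e : rvec3) (z : cvec3) : Prop :=
  Xc z /\ rsq (cim z) < 0 /\ det3 e (cre z) (cim z) < 0.
Definition T_left (e : rvec3) (z : cvec3) : Prop :=
  Xc z /\ rsq (cim z) < 0 /\ det3 e (cre z) (cim z) > 0.

Definition bvec : cvec3 := CV (RtoC 0) (RtoC 0) (RtoC 1).

Definition cut_plane (w : C) : Prop := ~ (Im w = 0 /\ -1 <= Re w <= 1).

(* Main.v *)
Require Import Defs.
From Stdlib Require Import Reals.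
From Coquelicot Require Import Coquelicot.
From Stdlib Require Import Lra Psatz.
Open Scope R_scope.

Lemma C_ext (u v : C) : Re u = Re v -> Im u = Im v -> u = v.
Proof. destruct u, v; unfold Re, Im; simpl; intros; subst; reflexivity. Qed.

Lemma cdot_re z w : Re (cdot z w) = rdot (cre z) (cre w) - rdot (cim z) (cim w).
Proof. destruct z as [[a b] [c d] [f g]], w as [[a' b'] [c' d'] [f' g']].
unfold cdot, rdot, cre, cim, Re, Im; simpl; ring. Qed.

Lemma cdot_im z w : Im (cdot z w) = rdot (cre z) (cim w) + rdot (cim z) (cre w).
Proof. destruct z as [[a b] [c d] [f g]], w as [[a' b'] [c' d'] [f' g']].
unfold cdot, rdot, cre, cim, Re, Im; simpl; ring. Qed.

Lemma rdot_sym a b : rdot a b = rdot b a.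
Proof. unfold rdot; ring. Qed.

Lemma Xc_eqs z : Xc z -> rdot (cre z) (cre z) - rdot (cim z) (cim z) = -1 /\ rdot (cre z) (cim z) = 0.
Proof. intro H. unfold Xc in H. split.
- rewrite <- cdot_re, H. reflexivity.
- assert (Im (cdot z z) = 0) by (rewrite H; reflexivity).
  rewrite cdot_im, (rdot_sym (cim z)) in H0. lra. Qed.

Definition cross (x y : rvec3) : rvec3 :=
  RV (r1 x * r2 y - r2 x * r1 y) (r0 x * r2 y - r2 x * r0 y) (r1 x * r0 y - r0 x * r1 y).

Lemma det_cross a x y : det3 a x y = rdot a (cross x y).
Proof. destruct a, x, y; unfold det3, rdot, cross; simpl; ring. Qed.

Lemma gram a b x y : rdot a (cross x y) * rdot b (cross x y) =
  rdot a b * (rdot x x * rdot y y - rdot x y * rdot x y)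
  - rdot a x * (rdot x b * rdot y y - rdot x y * rdot y b)
  + rdot a y * (rdot x b * rdot x y - rdot x x * rdot y b).
Proof. destruct a, b, x, y; unfold rdot, cross; simpl; ring. Qed.

Lemma binet x y x' y' : rdot (cross x y) (cross x' y') =
  rdot x x' * rdot y y' - rdot x y' * rdot y x'.
Proof. destruct x, y, x', y'; unfold rdot, cross; simpl; ring. Qed.
Lemma cs2 a1 a2 n1 n2 : (a1*n1+a2*n2)*(a1*n1+a2*n2) <= (a1*a1+a2*a2)*(n1*n1+n2*n2).
Proof. pose proof (Rle_0_sqr (a1*n2-a2*n1)). unfold Rsqr in H. nra. Qed.

Lemma sq_neg m k : m < 0 -> k*k < m*m -> m < k.
Proof. intros. destruct (Rlt_or_le m k); auto.
assert ((-m)*(-m) <= (-k)*(-k)) by (apply Rmult_le_compat; lra). lra. Qed.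
Lemma sq_pos m k : m > 0 -> k*k < m*m -> k < m.
Proof. intros. destruct (Rlt_or_le k m); auto.
assert (m*m <= k*k) by (apply Rmult_le_compat; lra). lra. Qed.

Lemma fut a0 a1 a2 n0 n1 n2 : a0 > 0 -> a0*a0 - a1*a1 - a2*a2 > 0 ->
  n0*n0 - n1*n1 - n2*n2 > 0 -> (a0*n0 - a1*n1 - a2*n2) * n0 > 0.
Proof. intros H0 H1 H2.
pose proof (cs2 a1 a2 n1 n2).
assert ((a1*a1+a2*a2)*(n1*n1+n2*n2) < (a0*a0)*(n0*n0)).
{ apply Rle_lt_trans with ((a1*a1+a2*a2)*(n0*n0)). apply Rmult_le_compat_l; nra.
  apply Rmult_lt_compat_r; nra. }
replace ((a0*n0 - a1*n1 - a2*n2)*n0) with ((a0*n0 - (a1*n1+a2*n2))*n0) by ring.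
set (k := a1*n1+a2*n2) in *. set (m := a0*n0) in *.
assert (k*k < m*m) by (replace (m*m) with (a0*a0*(n0*n0)) by (unfold m; ring); lra).
destruct (Rtotal_order n0 0) as [h|[h|h]].
- assert (m < 0) by (unfold m; nra).
  assert (m < k) by (apply sq_neg; auto). replace ((m - k)*n0) with ((k - m)*(-n0)) by ring.
  apply Rmult_lt_0_compat; lra.
- subst n0. pose proof (Rle_0_sqr n1). pose proof (Rle_0_sqr n2). unfold Rsqr in *. lra.
- assert (m > 0) by (unfold m; nra).
  assert (k < m) by (apply sq_pos; auto).
  apply Rmult_lt_0_compat; lra.
Qed.

Lemma timelike (e N M : rvec3) : Vplus e -> rsq N > 0 -> rsq M > 0 ->
  rdot e N > 0 -> rdot e M < 0 -> rdot N M < 0.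
Proof. destruct e as [a0 a1 a2], N as [n0 n1 n2], M as [m0 m1 m2].
unfold Vplus, rsq, rdot; simpl. intros [H1 H0] HN HM HeN HeM.
pose proof (fut _ _ _ _ _ _ H0 H1 HN).
pose proof (fut _ _ _ _ _ _ H0 H1 HM).
assert (n0 > 0) by nra. assert (m0 < 0) by nra.
pose proof (fut _ _ _ _ _ _ H3 HN HM). nra. Qed.

Lemma scal X Y X' Y' P Q R S p q :
  X = Y - 1 -> Y < 0 -> X' = Y' - 1 -> Y' < 0 -> S = -R -> P*Q + R*R < 0 ->
  p*p = X'*X*Y - P*P*Y - S*S*X ->
  q*q = Y'*X*Y - R*R*Y - Q*Q*X ->
  p*q = - P*R*Y - S*Q*X ->
  (P-Q)*(P-Q) > 1.
Proof. intros hX hY hX' hY' hS hPQ hp hq hpq.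
set (t := -X*Q + Y*P). set (s := -R).
assert (XY : X*Y > 0) by nra.
assert (e1 : p*q = s*t) by (unfold s, t; rewrite hpq, hS; ring).
assert (e2 : p*p - q*q - s*s + t*t = X*Y*((P-Q)*(P-Q)-1)).
{ unfold s, t; rewrite hp, hq, hS, hX'. subst X. ring. }
assert (e3 : q*q < t*t).
{ rewrite hq. unfold t.
  assert (-2*X*Y*P*Q > 2*X*Y*R*R) by nra.
  assert (Y'*X*Y < 0) by nra.
  subst X. nra. }
assert (ss : s*s <= p*p).
{ assert (s*s*(t*t) <= p*p*(t*t)). { replace (s*s*(t*t)) with ((p*q)*(p*q)) by (rewrite e1; ring). nra. }
  nra. }
nra. Qed.

Lemma core z z' : Xc z -> Xc z' -> rsq (cim z) < 0 -> rsq (cim z') < 0 ->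
  rdot (cross (cre z) (cim z)) (cross (cre z') (cim z')) < 0 -> cut_plane (cdot z z').
Proof.
intros hz hz' hy hy' hNN [hIm hRe].
rewrite cdot_im in hIm. rewrite cdot_re in hRe.
destruct (Xc_eqs z hz) as [hX hxy]. destruct (Xc_eqs z' hz') as [hX' hxy'].
unfold rsq in hy, hy'.
set (x := cre z) in *. set (y := cim z) in *. set (x' := cre z') in *. set (y' := cim z') in *.
rewrite binet in hNN.
assert (H : (rdot x x' - rdot y y') * (rdot x x' - rdot y y') > 1).
{ apply (scal (rdot x x) (rdot y y) (rdot x' x') (rdot y' y') (rdot x x') (rdot y y') (rdot x y') (rdot y x')
    (rdot x' (cross x y)) (rdot y' (cross x y))).
  - lra.
  - lra.
  - lra.
  - lra.
  - lra.
  - replace (rdot x y' * rdot x y') with (- (rdot x y' * rdot y x')) by (replace (rdot y x') with (- rdot x y') by lra; ring). lra.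
  - rewrite gram, (rdot_sym x' x), (rdot_sym x' y), hxy. ring.
  - rewrite gram, (rdot_sym y' x), (rdot_sym y' y), hxy. ring.
  - rewrite gram, (rdot_sym x' x), (rdot_sym x' y), (rdot_sym x y'), (rdot_sym y y'), hxy, hxy'. ring. }
nra.
Qed.

Lemma core_LR e z z' : Vplus e -> T_left e z -> T_right e z' -> cut_plane (cdot z z').
Proof.
intros he [hz [hy hd]] [hz' [hy' hd']]. apply core; auto.
destruct (Xc_eqs z hz) as [hX hxy]. destruct (Xc_eqs z' hz') as [hX' hxy'].
unfold rsq in *.
apply (timelike e); auto.
- unfold rsq. rewrite binet. rewrite hxy. nra.
- unfold rsq. rewrite binet. rewrite hxy'. nra.
- rewrite <- det_cross. lra.
- rewrite <- det_cross. lra.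
Qed.

Lemma cdot_sym z z' : cdot z z' = cdot z' z.
Proof. apply C_ext; [rewrite !cdot_re | rewrite !cdot_im]; rewrite !(rdot_sym (cre z)), !(rdot_sym (cim z)); ring. Qed.

Lemma core_RL e z z' : Vplus e -> T_right e z -> T_left e z' -> cut_plane (cdot z z').
Proof. intros. rewrite cdot_sym. eapply core_LR; eauto. Qed.

Lemma sub1 e z : T_left e z \/ T_right e z -> cut_plane (Copp (cdot z bvec)).
Proof.
intros H. assert (hz : Xc z /\ rsq (cim z) < 0) by (destruct H as [[? [? ?]]|[? [? ?]]]; auto).
destruct hz as [hz hy]. destruct (Xc_eqs z hz) as [hX hxy].
destruct z as [[x0 y0] [x1 y1] [x2 y2]].
unfold cut_plane, bvec, cdot, rsq, rdot, cre, cim, Re, Im in *; simpl in *.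
intros [h1 h2]. 
assert (hy2 : y2 = 0) by lra. subst y2.
assert (y1*y1 > 0) by nra.
assert (x1*x1*(y1*y1) = x0*x0*(y0*y0)) by (replace (x1*x1*(y1*y1)) with ((x1*y1)*(x1*y1)) by ring; replace (x1*y1) with (x0*y0) by lra; ring).
assert (x0*x0*(y0*y0) <= x0*x0*(y1*y1)) by (apply Rmult_le_compat_l; nra).
assert (x1*x1 <= x0*x0) by nra.
assert (x2*x2 <= 1) by nra.
nra.
Qed.
Lemma csqrt u v : exists p q, p*p - q*q = u /\ 2*p*q = v.
Proof.
set (m := sqrt (u*u+v*v)).
assert (hm : m*m = u*u+v*v) by (apply sqrt_sqrt; nra).
assert (hm0 : 0 <= m) by apply sqrt_pos.
assert (hmu : u <= m /\ -u <= m).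
{ split; apply Rnot_lt_le; intro; nra. }
set (p := sqrt ((m+u)/2)). set (q0 := sqrt ((m-u)/2)).
assert (hp : p*p = (m+u)/2) by (apply sqrt_sqrt; lra).
assert (hq : q0*q0 = (m-u)/2) by (apply sqrt_sqrt; lra).
assert (p0 : 0 <= p) by apply sqrt_pos. assert (q00 : 0 <= q0) by apply sqrt_pos.
assert (hpq : (2*p*q0)*(2*p*q0) = v*v) by (replace ((2*p*q0)*(2*p*q0)) with (4*(p*p)*(q0*q0)) by ring; rewrite hp, hq; nra).
destruct (Rle_or_lt 0 v) as [hv|hv].
- exists p, q0. split. lra.
  assert (0 <= 2*p*q0) by (apply Rmult_le_pos; lra).
  destruct (Rtotal_order (2*p*q0) v) as [h|[h|h]]; auto.
  + assert ((2*p*q0)*(2*p*q0) < v*v) by (apply Rmult_le_0_lt_compat; lra). lra.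
  + assert (v*v < (2*p*q0)*(2*p*q0)) by (apply Rmult_le_0_lt_compat; lra). lra.
- exists p, (-q0). split. lra.
  assert (0 <= 2*p*q0) by (apply Rmult_le_pos; lra).
  replace (2*p*(-q0)) with (-(2*p*q0)) by ring.
  destruct (Rtotal_order (2*p*q0) (-v)) as [h|[h|h]]; try lra.
  + assert ((2*p*q0)*(2*p*q0) < (-v)*(-v)) by (apply Rmult_le_0_lt_compat; lra). lra.
  + assert ((-v)*(-v) < (2*p*q0)*(2*p*q0)) by (apply Rmult_le_0_lt_compat; lra). lra.
Qed.

Lemma nonzero a b p q : ~ (b = 0 /\ -1 <= a <= 1) -> p*p - q*q = 1 - a*a + b*b ->
  2*p*q = -(2*a*b) -> p*b - a*q <> 0.
Proof.
intros hw h1 h2 h3.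
destruct (Req_dec b 0) as [hb|hb].
- subst b. assert (a*a > 1).
  { apply Rnot_le_lt. intro. apply hw. split; auto. split; apply Rnot_lt_le; intro; nra. }
  assert (a <> 0) by (intro; subst; lra).
  assert (q = 0). { assert (a*q = 0) by lra. destruct (Rmult_integral _ _ H1); auto; contradiction. }
  subst q. nra.
- assert (a*(q*q+b*b) = 0).
  { apply (Rmult_eq_reg_l b); auto. replace (b*(a*(q*q+b*b))) with (a*q*q*b + a*b*b*b) by ring.
    replace (a*q) with (p*b) by lra. nra. }
  assert (q*q+b*b > 0) by nra.
  assert (a = 0). { destruct (Rmult_integral _ _ H); auto; lra. }
  subst a. assert (p = 0). { assert (p*b = 0) by lra. destruct (Rmult_integral _ _ H1); auto; contradiction. }
  subst p. nra.
Qed.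

Lemma oriented_root a b : ~ (b = 0 /\ -1 <= a <= 1) ->
  (exists p q, p*p - q*q = 1 - a*a + b*b /\ 2*p*q = -(2*a*b) /\ p*b - a*q < 0) /\
  (exists p q, p*p - q*q = 1 - a*a + b*b /\ 2*p*q = -(2*a*b) /\ p*b - a*q > 0).
Proof.
intros hw. destruct (csqrt (1 - a*a + b*b) (-(2*a*b))) as [p [q [h1 h2]]].
pose proof (nonzero a b p q hw h1 h2) as hn.
destruct (Rtotal_order (p*b - a*q) 0) as [h|[h|h]]; [|contradiction|]; split.
- exists p, q. auto.
- exists (-p), (-q). repeat split; try lra; nra.
- exists (-p), (-q). repeat split; try lra; nra.
- exists p, q. auto.
Qed.


Lemma sup1 e w : Vplus e -> cut_plane w ->
  (exists z, T_right e z /\ w = Copp (cdot z bvec)) /\ (exists z, T_left e z /\ w = Copp (cdot z bvec)).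
Proof.
intros [he1 he0] hw. destruct w as [a b]. unfold cut_plane, Re, Im in hw; simpl in hw.
destruct (oriented_root a b hw) as [[p [q [h1 [h2 h3]]]] [p' [q' [h1' [h2' h3']]]]].
split.
- exists (CV (RtoC 0) (p,q) (a,b)). split; [split; [|split]|].
  + unfold Xc. apply C_ext; unfold cdot, RtoC, Re, Im; simpl; nra.
  + unfold rsq, rdot, cim, Re, Im; simpl.
    assert (~ (q = 0 /\ b = 0)) by (intros [-> ->]; lra). 
    destruct (Req_dec q 0); destruct (Req_dec b 0); try tauto; nra.
  + unfold det3, cre, cim, RtoC, Re, Im; simpl.
    replace (r0 e * (p * b - a * q) - 0 * (r1 e * b - r2 e * q) + 0 * (r1 e * a - r2 e * p)) with (r0 e * (p*b - a*q)) by ring.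
    nra.
  + apply C_ext; unfold cdot, bvec, RtoC, Re, Im; simpl; ring.
- exists (CV (RtoC 0) (p',q') (a,b)). split; [split; [|split]|].
  + unfold Xc. apply C_ext; unfold cdot, RtoC, Re, Im; simpl; nra.
  + unfold rsq, rdot, cim, Re, Im; simpl.
    assert (~ (q' = 0 /\ b = 0)) by (intros [-> ->]; lra). 
    destruct (Req_dec q' 0); destruct (Req_dec b 0); try tauto; nra.
  + unfold det3, cre, cim, RtoC, Re, Im; simpl.
    replace (r0 e * (p' * b - a * q') - 0 * (r1 e * b - r2 e * q') + 0 * (r1 e * a - r2 e * p')) with (r0 e * (p'*b - a*q')) by ring.
    nra.
  + apply C_ext; unfold cdot, bvec, RtoC, Re, Im; simpl; ring.
Qed.

Lemma sup3 e w : Vplus e -> cut_plane w ->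
  exists z z', T_left e z /\ T_right e z' /\ w = cdot z z'.
Proof.
intros [he1 he0] hw. destruct w as [a b]. unfold cut_plane, Re, Im in hw; simpl in hw.
destruct (oriented_root a b hw) as [[p1 [q1 [h1 [h2 h3]]]] _].
set (D := a*q1 - b*p1).
assert (hD : D > 0) by (unfold D; lra).
set (N := p1*p1+q1*q1+a*a+b*b).
assert (hN2 : 2*D <= N) by (unfold D, N; nra).
assert (hN : N > 0) by lra.
set (s := D/(2*N)).
assert (hs : s > 0) by (unfold s; apply Rdiv_lt_0_compat; lra).
assert (hsN : s*N = D/2) by (unfold s; field; lra).
assert (hs4 : s <= 1/4) by (unfold s; apply (Rmult_le_reg_r (2*N)); [lra|]; field_simplify; lra).
set (c := sqrt (1 + s*s)).
assert (hc : c*c = 1 + s*s) by (apply sqrt_sqrt; nra).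
assert (hc0 : 0 <= c) by apply sqrt_pos.
assert (hc2 : c < 2) by nra.
assert (hc1 : 1 <= c) by nra.
exists (CV (RtoC 0) (c*p1 + s*b, c*q1 - s*a) (-c*a + s*q1, -c*b - s*p1)).
exists (CV (RtoC 0) (0, s) (c, 0)).
assert (hor : (c*p1 + s*b)*(-c*b - s*p1) - (-c*a + s*q1)*(c*q1 - s*a) = (c*c+s*s)*D - s*c*N)
  by (unfold D, N; ring).
assert (hpos : (c*c+s*s)*D - s*c*N > 0).
{ replace (s*c*N) with (c*(s*N)) by ring. rewrite hsN. nra. }
split; [split; [|split]|split; [split; [|split]|]].
- unfold Xc. apply C_ext; unfold cdot, RtoC, Re, Im; simpl.
  + match goal with |- ?L = ?R => replace L with (-((c*c - s*s)*(p1*p1 - q1*q1 + a*a - b*b))) by ring end.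
    rewrite hc. replace (p1*p1 - q1*q1 + a*a - b*b) with 1 by lra. ring.
  + match goal with |- ?L = ?R => replace L with (-((c*c - s*s)*(2*p1*q1 + 2*a*b))) by ring end.
    rewrite h2. ring.
- unfold rsq, rdot, cim, Re, Im; simpl.
  assert (~ (c*q1 - s*a = 0 /\ -c*b - s*p1 = 0)) by (intros [e1 e2]; rewrite e1, e2 in hor; nra).
  destruct (Req_dec (c*q1 - s*a) 0); destruct (Req_dec (-c*b - s*p1) 0); try tauto; nra.
- unfold det3, cre, cim, RtoC, Re, Im; simpl.
  match goal with |- ?L > ?R => replace L with (r0 e * ((c*p1 + s*b)*(-c*b - s*p1) - (-c*a + s*q1)*(c*q1 - s*a))) by ring end.
  rewrite hor. nra.
- unfold Xc. apply C_ext; unfold cdot, RtoC, Re, Im; simpl.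
  + match goal with |- ?L = ?R => replace L with (s*s - c*c) by ring end. lra.
  + ring.
- unfold rsq, rdot, cim, Re, Im; simpl. nra.
- unfold det3, cre, cim, RtoC, Re, Im; simpl.
  match goal with |- ?L < ?R => replace L with (-(r0 e * c * s)) by ring end.
  assert (r0 e * c * s > 0) by (apply Rmult_lt_0_compat; [apply Rmult_lt_0_compat|]; lra). lra.
- apply C_ext; unfold cdot, RtoC, Re, Im; simpl.
  + match goal with |- ?L = ?R => replace R with (a*(c*c - s*s)) by ring end. rewrite hc. ring.
  + match goal with |- ?L = ?R => replace R with (b*(c*c - s*s)) by ring end. rewrite hc. ring.
Qed.

Theorem proposition6 (e : rvec3) (he : Vplus e) :
  (forall w : C, (exists z, T_right e z /\ w = Copp (cdot z bvec)) <-> cut_plane w) /\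
  (forall w : C, (exists z, T_left e z /\ w = Copp (cdot z bvec)) <-> cut_plane w) /\
  (forall w : C, (exists z z', T_left e z /\ T_right e z' /\ w = cdot z z') <-> cut_plane w) /\
  (forall w : C, (exists z z', T_right e z /\ T_left e z' /\ w = cdot z z') <-> cut_plane w).
Proof.
split; [|split; [|split]]; intro w; split.
- intros [z [hz ->]]. apply (sub1 e). auto.
- intro hw. exact (proj1 (sup1 e w he hw)).
- intros [z [hz ->]]. apply (sub1 e). auto.
- intro hw. exact (proj2 (sup1 e w he hw)).
- intros [z [z' [hz [hz' ->]]]]. eapply core_LR; eauto.
- intro hw. apply sup3; auto.
- intros [z [z' [hz [hz' ->]]]]. eapply core_RL; eauto.
- intro hw. destruct (sup3 e w he hw) as [z [z' [hz [hz' hw']]]].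
  exists z', z. split; [auto|split; [auto|]]. rewrite cdot_sym. auto.
Qed.
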